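(* For all integers $p\ge4$, $d\ge2$ and $n\ge2$, $$p\,n\,N_{d,n}<(d^{p-1}-d^{\lfloor p/2\rfloor})(d^{p-1}-1)^{n-1},$$ where $N_{d,n}=\binom{d+n}{n}-n-1$. *)

(* Defs.v *)
From mathcomp Require Import all_boot.
Set Implicit Arguments. Unset Strict Implicit. Unset Printing Implicit Defensive.

(* N_{d,n} = binom(d+n, n) - n - 1  (nonnegative: binom(d+n,n) >= n+1 for d>=1) *)
Definition Ndn (d n : nat) : nat := 'C(d + n, n) - n - 1.

(* Main.v *)
Require Import Defs.
From mathcomp Require Import all_boot.
From mathcomp Require Import zify.

Lemma bin2_mul (m : nat) : 2 * 'C(m, 2) = m * (m - 1).
Proof.
elim: m => [|m IH] //.
rewrite binS bin1 mulnDr IH; case: m {IH} => [|m] //=; nia.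
Qed.

Lemma bin_step (d n : nat) : (n.+1) * 'C(d + n.+1, n.+1) = (d + n.+1) * 'C(d + n, n).
Proof.
have := mul_bin_diag (d + n.+1) n.
by rewrite addnS /= => ->.
Qed.

Lemma gen (p d X M : nat) (hd : 2 <= d) (hM : d + 3 <= M)
  (hbase : p * 2 * ('C(d + 2, 2) - 2 - 1) < X * M ^ (2 - 1)) :
  forall n, 2 <= n ->
  p * n * ('C(d + n, n) - n - 1) < X * M ^ (n - 1) /\ 2 * (n + 1) <= 'C(d + n, n).
Proof.
elim => [|n IH] // hn.
case: (ltngtP 2 n.+1) hn => // h2 _; last first.
  rewrite -h2; split => //.
  have := bin2_mul (d + 2).
  have : 4 * 3 <= (d + 2) * (d + 2 - 1) by apply: leq_mul; lia.
  lia.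
have [IH1 IH2] := IH h2.
have E := bin_step d n.
set C := 'C(d + n, n) in IH1 IH2 E *.
set C' := 'C(d + n.+1, n.+1) in E *.
have hC' : 2 * (n.+1 + 1) <= C'.
  rewrite leqNgt; apply/negP => hlt.
  have : n.+1 * C' < n.+1 * (2 * (n.+1 + 1)) by rewrite ltn_pmul2l.
  rewrite E.
  have : (n+3) * (2 * (n + 1)) <= (d + n.+1) * C by apply: leq_mul; lia.
  move=> Ha Hb; move: Ha Hb; move: ((d + n.+1) * C) => z; clear; lia.
split => //.
have hMn : 2 * (d + n.+1) <= M * n.
  have : (d+3) * n <= M * n by apply: leq_mul.
  have : d * 2 <= d * n by apply: leq_mul.
  move: (M * n) => z; move=> Ha Hb; clear -Ha Hb h2; lia.
have h1 : (d + n.+1) * C <= M * n * (C - n - 1).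
  have h3 : C <= 2 * (C - n - 1) by lia.
  have : (d + n.+1) * (2 * (C - n - 1)) <= M * n * (C - n - 1).
    rewrite mulnA; apply: leq_mul => //. lia.
  have : (d + n.+1) * C <= (d + n.+1) * (2 * (C - n - 1)) by apply: leq_mul.
  lia.
have h2' : p * n.+1 * (C' - n.+1 - 1) <= M * (p * n * (C - n - 1)).
  apply: (@leq_trans (p * (n.+1 * C'))).
    rewrite mulnA; apply: leq_mul => //; lia.
  rewrite E; apply: (@leq_trans (p * (M * n * (C - n - 1)))); first exact: leq_mul.
  by rewrite !mulnA [p * M]mulnC.
apply: (leq_trans (n := (M * (p * n * (C - n - 1))).+1)) => //.
have -> : n.+1 - 1 = (n - 1).+1 by lia.
rewrite expnS [X * _]mulnCA ltn_pmul2l //; lia.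
Qed.
Theorem lemma5p5 (p d n : nat) (hp : 4 <= p) (hd : 2 <= d) (hn : 2 <= n) :
  p * n * Ndn d n < (d ^ (p - 1) - d ^ (p./2)) * (d ^ (p - 1) - 1) ^ (n - 1).
Proof.
rewrite /Ndn.
have hpk : p = (p - 4) + 4 by lia.
have hD : d ^ (p - 1) = d ^ 3 * d ^ (p - 4) by rewrite -expnD; congr (_ ^ _); lia.
have hq : d ^ (p./2) * d <= d ^ (p - 1).
  rewrite -expnSr; apply: leq_pexp2l; first lia.
  have := odd_double_half p; rewrite -addnn; case: (odd p) => /=; lia.
have ht : (p - 4).+1 <= d ^ (p - 4).
  exact: ltn_expl.
move: hD hq ht.
set t := d ^ (p - 4).
set D := d ^ (p - 1).
set q := d ^ (p./2) => hD hq ht.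
have hd3' : d ^ 3 = d * d * d by rewrite !expnS expn0 muln1 mulnA.
rewrite hd3' in hD.
have hdd : 8 <= d * d * d by have := leq_mul (leq_mul hd hd) hd.
apply: (proj1 (@gen p d (D - q) (D - 1) hd _ _ n hn)).
  have H4 : 2 * 2 * 1 <= d * d * t by apply: leq_mul; [apply: leq_mul|]; lia.
  have := leq_mul (leqnn d) H4; rewrite !mulnA; lia.
have := bin2_mul (d + 2).
set C2 := 'C(d + 2, 2) => hC2.
rewrite expn1.
have key : p * d * (d + 4) < D * (D - 1).
  have h4 : 4 * (d + 4) < d * d * (d * d * d - 1).
    have : 2 * 2 * (d * d * d - 1) <= d * d * (d * d * d - 1) by apply: leq_mul => //; apply: leq_mul.
    have := leq_mul (leqnn d) (leq_mul hd hd); rewrite !mulnA; lia.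
  have hp4 : p <= 4 * t by lia.
  have hD1 : d * d * d * t - 1 >= d * d * d - 1.
    have : d * d * d * 1 <= d * d * d * t by apply: leq_mul => //; lia.
    lia.
  rewrite hD.
  set a := d * d * d - 1 in h4 hD1 *.
  set b := d * d * d * t - 1 in hD1 *.
  have : p * d * (d + 4) <= 4 * t * d * (d + 4) by apply: leq_mul => //; apply: leq_mul.
  have : t * d * (4 * (d + 4)) < t * d * (d * d * a).
    rewrite ltn_pmul2l //; rewrite muln_gt0; apply/andP; split; lia.
  have : d * d * a * (t * d) <= d * d * b * (t * d).
    by apply: leq_mul => //; apply: leq_mul => //.
  move=> H1 H2 H3; clearbody a b; clear -H1 H2 H3; lia.
have hX : D * (d - 1) <= d * (D - q).
  rewrite mulnBr mulnBr muln1 [d * q]mulnC [d * D]mulnC; lia.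
have e1 : p * 2 * (C2 - 2 - 1) * d = p * d * (d + 4) * (d - 1).
  have hc : 2 * (C2 - 2 - 1) = (d + 4) * (d - 1).
    clear -hC2 hd; clearbody C2; case: d hd hC2 => // [[|e]] //= _ hC2; nia.
  rewrite -[p * d * (d + 4) * (d - 1)]mulnA -hc.
  move: (C2 - 2 - 1) => c; clear; lia.
rewrite -(ltn_pmul2r (_ : 0 < d)); last lia.
rewrite e1.
apply: (@leq_trans (D * (D - 1) * (d - 1))).
  rewrite ltn_pmul2r; lia.
rewrite mulnAC [(D - q) * (D - 1) * d]mulnAC leq_mul2r (mulnC (D - q)) hX orbT //.
Qed.
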